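(* Let $M$ be a multiway system and let $(f,g)$ be its growth rate, i.e. either $(f,g)=(1,1)$ if $M$ is finite or bounded, or $f,g:\mathbb{R}_{\geq 0}\to\mathbb{R}_{\geq 0}$ are a pair of tight bounds of the growth function $g_M$ if $M$ is unbounded. Then there exists a constant $c\in\mathbb{R}$ such that $f,g\in o(e^{cx})$.
   Context: A (string-based) multiway system is a triple $M=(R,s_{\text{init}},\Sigma)$ where $\Sigma$ is a finite alphabet, $R=\{r_1\to t_1,\dots,r_k\to t_k\}$ is a finite set of string replacement rules with $r_i,t_i\in\Sigma^*$, and $s_{\text{init}}\in\Sigma^*$. Its states graph is the directed graph whose vertices are the strings reachable from $s_{\text{init}}$, with an edge $u\to v$ whenever $v$ arises from $u$ by replacing one occurrence of some $r_i$ in $u$ by $t_i$. The growth function $g_M(n)$ ($n\in\mathbb{N}_+$) is the number of states whose shortest-path distance from $s_{\text{init}}$ in the states graph equals $n-1$ (so $g_M(1)=1$; each generation counts only newly appearing states). $M$ is finite if $g_M(n)=0$ for some $n$; bounded if it is not finite and $g_M$ is bounded; unbounded otherwise. For an unbounded system with growth function $a$, put $\overline{a}_n=\max\{a_k: k\le n\}$ and $\underline{a}_n=\max(\{a_k : k\le n,\ \forall l\ge k: a_l\ge a_k\}\cup\{1\})$. For $h:\mathbb{N}_+\to\mathbb{N}_+$ and infinite $S\subseteq\mathbb{N}_+$, the linear interpolation $L_S(h):\mathbb{R}_{\ge0}\to\mathbb{R}_{\ge0}$ is the polygonal chain starting at $(0,0)$ and passing through the points $(n,h(n))$, $n\in S$,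 in increasing order of $n$. Continuous $f,g:\mathbb{R}_{\ge0}\to\mathbb{R}_{\ge0}$ are tight bounds of $a$ if $f\in\Theta(L_{\mathbb{N}_+}(\overline{a}))$ and $g\in\Theta(L_{\mathbb{N}_+}(\underline{a}))$. Here $\mathcal{O},o,\Omega,\omega,\Theta$ are the usual asymptotic classes as $x\to\infty$. *)

(* Defs.v *)
From HB Require Import structures.
From mathcomp Require Import all_boot all_order all_algebra.
From mathcomp Require Import all_classical all_reals all_analysis.
Set Implicit Arguments. Unset Strict Implicit. Unset Printing Implicit Defensive.
Import Order.TTheory GRing.Theory Num.Theory.
Import numFieldNormedType.Exports.

Record mws (Sigma : finType) := MWS {
  mws_rules : seq (seq Sigma * seq Sigma);
  mws_init  : seq Sigma }.

Section MWS.
Variable Sigma : finType.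
Implicit Types (M : mws Sigma) (u v : seq Sigma).

Definition mws_step M u v : Prop :=
  exists x y r t, (r, t) \in mws_rules M /\ u = x ++ r ++ y /\ v = x ++ t ++ y.

Definition succs M u : seq (seq Sigma) :=
  undup (flatten [seq [seq take i u ++ rt.2 ++ drop (i + size rt.1) u
                        | i <- iota 0 (size u).+1 & take (size rt.1) (drop i u) == rt.1]
                 | rt <- mws_rules M]).

Fixpoint ball M (k : nat) : seq (seq Sigma) :=
  match k with
  | 0 => [:: mws_init M]
  | k'.+1 => undup (ball M k' ++ flatten (map (succs M) (ball M k')))
  end.

(* Growth function g_M(n), n >= 1: number of states at distance exactly n-1.
   (g_M 0 is a dummy value 0; only n >= 1 is meaningful.) *)
Definition growth M (n : nat) : nat :=
  match n with
  | 0 => 0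
  | 1 => 1
  | k.+2 => size (ball M k.+1) - size (ball M k)
  end.

Definition mws_finite M : Prop := exists n, (1 <= n)%N /\ growth M n = 0.
Definition mws_bounded M : Prop :=
  ~ mws_finite M /\ exists B, forall n, (1 <= n)%N -> (growth M n <= B)%N.
Definition mws_unbounded M : Prop := ~ mws_finite M /\ ~ mws_bounded M.

End MWS.

Definition upper_env (a : nat -> nat) (n : nat) : nat :=
  \max_(1 <= k < n.+1) a k.

Definition lower_env (a : nat -> nat) (n : nat) : nat :=
  maxn 1 (\max_(1 <= k < n.+1)
            (if `[< forall l, (k <= l)%N -> (a k <= a l)%N >] then a k else 0)).

Section Real.
Variable R : realType.
Local Open Scope classical_set_scope.
Local Open Scope ring_scope.

(* Linear interpolation L_{N_+}(h): polygonal chain through (0,0) and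
   (n, h n) for n >= 1; meaningful for x >= 0. *)
Definition lin_interp (h : nat -> nat) (x : R) : R :=
  let hz := fun k : nat => if k is 0 then 0 else (h k)%:R : R in
  let n := Num.truncn x in
  hz n + (x - n%:R) * (hz n.+1 - hz n).

Definition bigTheta (f h : R -> R) : Prop :=
  exists c1 c2 x0 : R, 0 < c1 /\ 0 < c2 /\
    forall x, x0 <= x -> c1 * `|h x| <= `|f x| /\ `|f x| <= c2 * `|h x|.

Definition little_o_exp (f : R -> R) (c : R) : Prop :=
  forall eps : R, 0 < eps ->
    exists x0 : R, forall x, x0 <= x -> `|f x| <= eps * expR (c * x).

(* f : R_{>=0} -> R_{>=0} continuous (represented on R, restricted to [0,oo)) *)
Definition nonneg_cont (f : R -> R) : Prop :=
  {within `[0, +oo[, continuous f} /\ forall x, 0 <= x -> 0 <= f x.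

Definition tight_bounds (a : nat -> nat) (f g : R -> R) : Prop :=
  nonneg_cont f /\ nonneg_cont g /\
  bigTheta f (lin_interp (upper_env a)) /\ bigTheta g (lin_interp (lower_env a)).

Definition growth_rate (Sigma : finType) (M : mws Sigma) (f g : R -> R) : Prop :=
  ((mws_finite M \/ mws_bounded M) /\ f = (fun _ => 1) /\ g = (fun _ => 1))
  \/ (mws_unbounded M /\ tight_bounds (growth M) f g).

End Real.

(* Main.v *)
Require Import Defs.
From HB Require Import structures.
From mathcomp Require Import all_boot all_order all_algebra.
From mathcomp Require Import all_classical all_reals all_analysis.
From mathcomp Require Import zify.
From mathcomp Require Import lra.
Import Order.TTheory GRing.Theory Num.Theory.
Section Comb.
Variable Sigma : finType.
Variable M : mws Sigma.

Definition Dm := sumn [seq size rt.2 | rt <- mws_rules M].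

Lemma rule_le (s : seq (seq Sigma * seq Sigma)) rt :
  rt \in s -> size rt.2 <= sumn [seq size rt.2 | rt <- s].
Proof.
elim: s => //= a s IH; rewrite inE => /orP [/eqP->|/IH]; lia.
Qed.

Lemma arith_aux (i t r U D : nat) : t <= D -> minn i U + (t + (U - (i + r))) <= U + D.
Proof. lia. Qed.

Lemma succs_size u v : v \in succs M u -> size v <= size u + Dm.
Proof.
rewrite mem_undup => /flattenP [s /mapP [rt Hrt ->]].
case/mapP => i _ ->.
rewrite !size_cat size_take_min size_drop.
exact: arith_aux (rule_le _ _ Hrt).
Qed.

Lemma ball_size k s : s \in Defs.ball M k -> size s <= size (mws_init M) + k * Dm.
Proof.
elim: k s => [|k IH] s /=; first by rewrite inE => /eqP ->; lia.
rewrite mem_undup mem_cat => /orP [H|H]; first by apply: leq_trans (IH _ H) _; rewrite leq_add2l leq_mul2r leqnSn orbT.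
move: H.
case/flattenP => l /mapP [u Hu ->] /succs_size.
move=> Hs; apply: leq_trans Hs _; rewrite mulSnr addnA leq_add2r; exact: IH.
Qed.

Lemma ball_uniq k : uniq (Defs.ball M k).
Proof. by case: k => //= k; exact: undup_uniq. Qed.


Fixpoint allstr (n : nat) : seq (seq Sigma) :=
  if n is n'.+1 then [::] :: [seq x :: t | x <- enum Sigma, t <- allstr n']
  else [:: [::]].

Lemma mem_allstr n (t : seq Sigma) : size t <= n -> t \in allstr n.
Proof.
elim: n t => [|n IH] [|x t] //=; rewrite ?inE ?eqxx //.
rewrite ltnS => Ht; apply/orP; right.
by apply/allpairsPdep; exists x, t; rewrite mem_enum IH.
Qed.

Lemma size_allstr n : size (allstr n) <= (#|Sigma|.+1) ^ n.
Proof.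
elim: n => [|n IH] //=.
rewrite size_allpairs -cardE expnS mulSn.
have H0 : 0 < #|Sigma|.+1 ^ n by rewrite expn_gt0.
apply: leq_ltn_trans (leq_mul (leqnn #|Sigma|) IH) _.
by rewrite -{1}(add0n (#|Sigma| * _)) ltn_add2r.
Qed.

Lemma size_ball k : size (Defs.ball M k) <= (#|Sigma|.+1) ^ (size (mws_init M) + k * Dm).
Proof.
apply: leq_trans (size_allstr _).
apply: uniq_leq_size; first exact: ball_uniq.
by move=> s /ball_size; apply: mem_allstr.
Qed.

Definition Bm := (#|Sigma|.+1) ^ (size (mws_init M) + Dm).

Lemma Bm_gt0 : 0 < Bm.
Proof. by rewrite expn_gt0. Qed.

Lemma growth_le n : growth M n <= Bm ^ n.
Proof.
case: n => [|[|k]] //; first by rewrite expn1 Bm_gt0.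
rewrite /growth.
apply: leq_trans (leq_subr _ _) _.
apply: leq_trans (size_ball _) _.
rewrite /Bm -expnM leq_pexp2l //.
lia.
Qed.


End Comb.

Lemma upper_env_le (a : nat -> nat) B : 0 < B -> (forall n, a n <= B ^ n) ->
  forall n, upper_env a n <= B ^ n.
Proof.
move=> B0 Ha n; rewrite /upper_env big_nat_cond.
apply: (big_ind (fun v => v <= B ^ n)) => //.
  by move=> x y Hx Hy; rewrite geq_max Hx Hy.
move=> i /andP [/andP [_ Hi] _].
by apply: leq_trans (Ha i) _; rewrite leq_pexp2l.
Qed.

Lemma lower_env_le (a : nat -> nat) B : 0 < B -> (forall n, a n <= B ^ n) ->
  forall n, lower_env a n <= B ^ n.
Proof.
move=> B0 Ha n; rewrite /lower_env geq_max expn_gt0 B0 /= big_nat_cond.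
apply: (big_ind (fun v => v <= B ^ n)) => //.
  by move=> x y Hx Hy; rewrite geq_max Hx Hy.
move=> i /andP [/andP [_ Hi] _].
case: ifP => _ //.
by apply: leq_trans (Ha i) _; rewrite leq_pexp2l.
Qed.

Local Open Scope ring_scope.
Section Real.
Variable R : realType.

Lemma conv_bound (a b t M : R) : 0 <= a <= M -> 0 <= b <= M -> 0 <= t <= 1 ->
  `|a + t * (b - a)| <= M.
Proof.
move=> /andP [a0 aM] /andP [b0 bM] /andP [t0 t1].
rewrite ger0_norm; nra.
Qed.

Lemma lin_bound (h : nat -> nat) (B : nat) : (0 < B)%N -> (forall n, h n <= B ^ n)%N ->
  forall x : R, 0 <= x -> `|lin_interp h x| <= (B ^ (Num.truncn x).+1)%:R.
Proof.
move=> B0 Hh x x0; rewrite /lin_interp; cbv beta zeta.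
have /andP [Hn1 Hn2] := truncn_itv x0.
have key : forall k, (k <= (Num.truncn x).+1)%N ->
   0 <= (match k with 0 => 0 | _ => (h k)%:R end : R) <= (B ^ (Num.truncn x).+1)%:R.
  case => [|k] Hk; first by rewrite lexx ler0n.
  rewrite ler0n ler_nat /=.
  exact: leq_trans (Hh _) (leq_pexp2l B0 Hk).
apply: conv_bound.
- by apply: key; exact: leqnSn.
- by rewrite ler0n ler_nat Hh.
rewrite subr_ge0 Hn1 /= lerBlDl ?natr1 1?addrC ?natr1; exact: ltW.
Qed.

Lemma theta_bound (f : R -> R) h B : (0 < B)%N -> (forall n, h n <= B ^ n)%N ->
  Defs.bigTheta f (lin_interp h) ->
  exists K x0, forall x, x0 <= x -> `|f x| <= K * expR (B%:R * x).
Proof.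
move=> B0 Hh [c1 [c2 [x0 [_ [c2p H]]]]].
exists (c2 * expR B%:R), (Num.max x0 0) => x; rewrite ge_max => /andP [Hx Hx0].
have [_ Hf] := H x Hx; apply: le_trans Hf _.
rewrite -mulrA ler_pM2l //.
apply: le_trans (@lin_bound h B B0 Hh x Hx0) _.
have /andP [Hn1 Hn2] := truncn_itv Hx0.
rewrite natrX -expRD.
apply: le_trans (_ : expR B%:R ^+ (Num.truncn x).+1 <= _).
  apply: lerXn2r; rewrite ?nnegrE ?ler0n ?expR_ge0 //.
  apply: le_trans (expR_ge1Dx _); rewrite lerDr //.
rewrite -expRM_natl ler_expR -natr1 mulrDl mul1r addrC lerD2l mulrC.
by rewrite ler_wpM2l ?ler0n.
Qed.

Lemma lo_helper (f : R -> R) c K x0 :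
  (forall x, x0 <= x -> `|f x| <= K * expR (c * x)) -> little_o_exp f (c + 1).
Proof.
move=> H eps eps0; exists (Num.max x0 (K / eps)) => x; rewrite ge_max => /andP [Hx HK].
apply: le_trans (H x Hx) _.
rewrite mulrDl mul1r expRD mulrCA (mulrC K).
apply: ler_wpM2l; first exact: expR_ge0.
have HK' : K <= eps * x by rewrite mulrC -ler_pdivrMr.
apply: le_trans HK' _; apply: ler_wpM2l; first exact: ltW.
apply: le_trans (expR_ge1Dx x); rewrite lerDr //.
Qed.
End Real.

Theorem lemma1 (R : realType) (Sigma : finType) (M : mws Sigma) (f g : R -> R) :
  growth_rate M f g ->
  exists c : R, little_o_exp f c /\ little_o_exp g c.
Proof.
case => [[_ [-> ->]] | [_ [_ [_ [Hf Hg]]]]].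
  exists (0 + 1); split; apply: (@lo_helper R _ 0 1 0) => x _;
  by rewrite normr1 mul0r expR0 mulr1.
have B0 := Bm_gt0 _ M.
have Hu := @upper_env_le (growth M) (Bm _ M) B0 (@growth_le _ M).
have Hl := @lower_env_le (growth M) (Bm _ M) B0 (@growth_le _ M).
have [K1 [x1 H1]] := @theta_bound R f _ _ B0 Hu Hf.
have [K2 [x2 H2]] := @theta_bound R g _ _ B0 Hl Hg.
exists ((Bm _ M)%:R + 1); split; [exact: lo_helper H1 | exact: lo_helper H2].
Qed.
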